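(* Let $G$ be a $2$-vertex-connected, unambiguously weighted rooted graph with positive edge weights and root edge $e=t_1t_2$, let $C_1,C_2,\dots$ be a greedy cycle sequence for $G$, and let $A_i$ be its $i$th ambit. Let $x$ be a point of $A_i$ (either a vertex of $A_i$, or a point interior to an edge of $A_i$, modeled by subdividing that edge into two edges of positive weight summing to the original weight). Then $A_i$ contains the shortest path in $G$ from $x$ to $t_1$ and the shortest path in $G$ from $x$ to $t_2$.
   Context: A rooted graph is an undirected graph with a designated root edge $e$; a cycle (connected $2$-regular subgraph) is rooted if it contains $e$. Edges have positive real weights; the weight of a path or cycle is the sum of its edge weights, and shortest means of minimum weight. $G$ is unambiguously weighted if no two distinct paths have the same weight and no two distinct cycles have the same weight. A greedy cycle sequence is a sequence of rooted cycles $C_1,C_2,\dots$ such that (1) each $C_i$ contains an edge that is not in any of $C_1,\dots,C_{i-1}$, and (2) subject to (1), each $C_i$ has minimum possible weight among rooted cycles. The $i$th ambit $A_i$ is the subgraph of $G$ formed by all vertices and edges of $C_1,\dots,C_i$. *)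

(* Defs.v *)
From HB Require Import structures.
From mathcomp Require Import all_boot all_order all_algebra.
Set Implicit Arguments. Unset Strict Implicit. Unset Printing Implicit Defensive.
Import Order.TTheory GRing.Theory Num.Theory.
Local Open Scope ring_scope.

(* Edge weights are a function w : {set V} -> R (only its values on E matter). *)
Section Graphs.
Variables (V : finType) (E : {set {set V}}).

Definition simple_graph : Prop := forall e, e \in E -> #|e| = 2%N.

Definition gadj : rel V := fun u v => [set u; v] \in E.

Definition is_path (p : seq V) : bool :=
  if p is x :: q then uniq p && path gadj x q else false.

Definition pedges (p : seq V) : seq {set V} :=
  [seq [set e.1; e.2] | e <- zip p (behead p)].

Definition path_from_to (p : seq V) (x y : V) : bool :=
  [&& is_path p, head x p == x & last x p == y].

Definition is_cycle (c : seq V) : bool :=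
  [&& uniq c, (2 < size c)%N & cycle gadj c].

Definition cedges (c : seq V) : seq {set V} :=
  if c is x :: q then [seq [set e.1; e.2] | e <- zip c (rcons q x)] else [::].

Definition rooted_cycle (root : {set V}) (c : seq V) : bool :=
  is_cycle c && (root \in cedges c).

Definition connected_on (S : {set V}) : Prop :=
  forall u v, u \in S -> v \in S ->
    connect (fun a b => [&& gadj a b, a \in S & b \in S]) u v.

Definition two_connected : Prop :=
  [/\ (2 < #|V|)%N, connected_on setT & forall z, connected_on [set~ z]].

Variables (R : realDomainType) (w : {set V} -> R).

Definition pweight (p : seq V) : R := \sum_(e <- pedges p) w e.
Definition cweight (c : seq V) : R := \sum_(e <- cedges c) w e.

(* Paths / cycles are identified with their edge sets (as subgraphs). *)
Definition unambiguous : Prop :=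
  (forall p q, is_path p -> is_path q -> pweight p = pweight q ->
     [set e in pedges p] = [set e in pedges q]) /\
  (forall c d, is_cycle c -> is_cycle d -> cweight c = cweight d ->
     [set e in cedges c] = [set e in cedges d]).

Definition has_new_edge (Cs : seq (seq V)) (c : seq V) : bool :=
  has (fun e => ~~ has (fun d => e \in cedges d) Cs) (cedges c).

(* Cs = [:: C_1; C_2; ...] (0-indexed in the list) is a greedy cycle sequence *)
Definition greedy_seq (root : {set V}) (Cs : seq (seq V)) : Prop :=
  forall i, (i < size Cs)%N ->
    [/\ rooted_cycle root (nth [::] Cs i),
        has_new_edge (take i Cs) (nth [::] Cs i) &
        forall D, rooted_cycle root D -> has_new_edge (take i Cs) D ->
          cweight (nth [::] Cs i) <= cweight D].

Definition ambit_verts (Cs : seq (seq V)) (i : nat) : {set V} :=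
  [set v | has (fun c => v \in c) (take i Cs)].
Definition ambit_edges (Cs : seq (seq V)) (i : nat) : {set {set V}} :=
  [set e | has (fun c => e \in cedges c) (take i Cs)].

Definition in_ambit (Cs : seq (seq V)) (i : nat) (p : seq V) : Prop :=
  (forall v, v \in p -> v \in ambit_verts Cs i) /\
  (forall e, e \in pedges p -> e \in ambit_edges Cs i).

Definition shortest_path (p : seq V) (x y : V) : Prop :=
  path_from_to p x y /\
  forall q, path_from_to q x y -> pweight p <= pweight q.

(* Points interior to an edge uv: the point at distance a from u (and
   w(uv) - a from v), 0 < a < w(uv).  In the graph obtained by subdividing uv
   at this point x, a path from x to t consists of the segment from x to
   s in {u, v} followed by a path q of G from s to t not using the edge uv.
   We represent it by q. *)
Definition ppath (u v : V) (q : seq V) (t : V) : bool :=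
  [&& is_path q, (head u q == u) || (head u q == v), last u q == t
    & [set u; v] \notin pedges q].

Definition ppweight (u v : V) (a : R) (q : seq V) : R :=
  (if head u q == u then a else w [set u; v] - a) + pweight q.

Definition shortest_ppath (u v : V) (a : R) (q : seq V) (t : V) : Prop :=
  ppath u v q t /\
  forall q', ppath u v q' t -> ppweight u v a q <= ppweight u v a q'.

End Graphs.

(* Main.v *)
Require Import Defs.
From HB Require Import structures.
From mathcomp Require Import all_boot all_order all_algebra.
From mathcomp Require Import zify lra.
Import Order.TTheory GRing.Theory Num.Theory.
Local Open Scope ring_scope.
Set Implicit Arguments. Unset Strict Implicit.

Section Helpers.
Variables (V : finType) (E : {set {set V}}) (R : realFieldType) (w : {set V} -> R).
Implicit Types (x y z u v a b c d : V) (p q r s t I M N X Z : seq V) (e : {set V}).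

Lemma pedges_cons2 x y p : pedges (x :: y :: p) = [set x; y] :: pedges (y :: p).
Proof. by []. Qed.

Lemma pedges1 x : pedges [:: x] = [::].
Proof. by []. Qed.

Lemma pedges_cat p v q : pedges (p ++ v :: q) = pedges (rcons p v) ++ pedges (v :: q).
Proof.
elim: p => [//|x p IH]; case: p IH => [|z p] IH //.
by rewrite /= pedges_cons2 -/(cat (z :: p) (v :: q)) IH.
Qed.

Lemma pedges_catl x s t : pedges ((x :: s) ++ t) = pedges (x :: s) ++ pedges (last x s :: t).
Proof.
elim: s x => [|y s IH] x; first by case: t.
by rewrite (_ : pedges ((x :: y :: s) ++ t) = [set x; y] :: pedges ((y :: s) ++ t)) // IH.
Qed.

Lemma pedges_rcons z s x : pedges (rcons (z :: s) x) = rcons (pedges (z :: s)) [set last z s; x].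
Proof.
elim: s z => [|y s IH] z //.
by rewrite !rcons_cons pedges_cons2 -(rcons_cons y s x) IH.
Qed.

Lemma pedges_rev p : pedges (rev p) = rev (pedges p).
Proof.
elim: p => [//|x p IH]; case: p IH => [|z p] IH //.
rewrite rev_cons; case Hr: (rev (z :: p)) => [|a s].
  by move/(congr1 size): Hr; rewrite size_rev.
rewrite pedges_rcons -Hr IH pedges_cons2 rev_cons.
have -> : last a s = z.
  have := congr1 (last z) Hr; rewrite /= => <-.
  by rewrite rev_cons last_rcons.
by rewrite setUC.
Qed.

Lemma pweight_rev p : pweight w (rev p) = pweight w p.
Proof. by rewrite /pweight pedges_rev; apply: perm_big; rewrite perm_rev. Qed.

Lemma path_all x r : path (gadj E) x r = all (fun e => e \in E) (pedges (x :: r)).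
Proof. by elim: r x => [|y r IH] x //; rewrite [path _ _ _]/= pedges_cons2 [all _ (_ :: _)]/= IH. Qed.

Lemma is_pathE p : is_path E p = [&& p != [::], uniq p & all (fun e => e \in E) (pedges p)].
Proof. by case: p => [//|x r]; rewrite /is_path path_all. Qed.

Lemma zip_rcons_l (s : seq V) (t : seq V) y : size s = size t -> zip (rcons s y) t = zip s t.
Proof. by elim: s t => [|a s IH] [|b t] //= [] /IH ->. Qed.

Lemma cedgesE x q : cedges (x :: q) = pedges (x :: rcons q x).
Proof.
rewrite /cedges /pedges [behead _]/=; congr map.
by rewrite -rcons_cons zip_rcons_l // size_rcons.
Qed.

Lemma is_cycleE (cc : seq V) : is_cycle E cc = [&& uniq cc, (2 < size cc)%N & all (fun e => e \in E) (cedges cc)].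
Proof. by case: cc => [//|x q]; rewrite /is_cycle cedgesE -path_all. Qed.

Lemma mem_pedges_v p u v : [set u; v] \in pedges p -> (u \in p) && (v \in p).
Proof.
elim: p => [//|x p IH]; case: p IH => [//|y p] IH.
rewrite pedges_cons2 in_cons => /orP [/eqP H|/IH /andP [Hu Hv]].
  have Hu : u \in [set x; y] by rewrite -H set21.
  have Hv : v \in [set x; y] by rewrite -H set22.
  move: Hu Hv; rewrite !inE.
  by case/orP=> /eqP->; case/orP=> /eqP->; rewrite ?eqxx ?orbT.
by rewrite !(in_cons x) Hu Hv !orbT.
Qed.

Lemma mem_cedges_v (cc : seq V) u v : [set u; v] \in cedges cc -> (u \in cc) && (v \in cc).
Proof.
case: cc => [//|x q]; rewrite cedgesE => /mem_pedges_v.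
by rewrite !(in_cons x) !mem_rcons !in_cons; case/andP=> /orP[->|->] /orP[->|->]; rewrite ?orbT.
Qed.

Lemma rot_cedges X y Z : perm_eq (cedges (X ++ y :: Z)) (cedges (y :: Z ++ X)).
Proof.
case: X => [|x X]; first by rewrite cats0.
rewrite cat_cons !cedgesE !rcons_cat -cat_cons pedges_cat -cat_cons pedges_cat.
by rewrite !rcons_cons perm_catC.
Qed.

Lemma not_uniq_split (s : seq V) : ~~ uniq s -> exists p1 v s2 p3, s = p1 ++ v :: s2 ++ v :: p3.
Proof.
elim: s => [//|x s IH] /=; rewrite negb_and negbK.
case Hx: (x \in s) => /=.
  by move=> _; case/splitPr: Hx => s2 p3; exists [::], x, s2, p3.
by case/IH => p1 [v [s2 [p3 ->]]]; exists (x :: p1), v, s2, p3.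
Qed.

Lemma first_hit (P : pred V) q : has P q -> exists I c rest, [/\ q = I ++ c :: rest, P c & all (predC P) I].
Proof.
elim: q => [//|x q IH] /=; case Hx: (P x) => /=.
  by move=> _; exists [::], x, q.
by case/IH => I [c [rest [-> Hc HI]]]; exists (x :: I), c, rest; rewrite /= Hx.
Qed.

Lemma last_occ e p : e \in pedges p -> exists W1 a b W2, [/\ p = W1 ++ a :: b :: W2, e = [set a; b] & e \notin pedges (b :: W2)].
Proof.
elim: p => [//|x p IH]; case: p IH => [//|y p] IH.
rewrite pedges_cons2 in_cons; case H: (e \in pedges (y :: p)).
  by case/IH: H => W1 [a [b [W2 [-> He Hn]]]] _; exists (x :: W1), a, b, W2.
by rewrite orbF => /eqP He; exists [::], x, y, p; rewrite H.
Qed.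

Hypothesis hw : forall e, e \in E -> 0 <= w e.

Lemma shorten_walk d n p : (size p < n)%N -> p != [::] -> all (fun e => e \in E) (pedges p) ->
  exists q, [/\ is_path E q, head d q = head d p, last d q = last d p,
     pweight w q <= pweight w p & {subset pedges q <= pedges p}].
Proof.
elim: n p => [//|n IH] p Hs Hn Ha.
case Hu: (uniq p).
  by exists p; split => //; rewrite is_pathE Hn Hu Ha.
have [p1 [v [s2 [p3 Hp]]]] := not_uniq_split (negbT Hu).
have Hpe : pedges p = pedges (rcons p1 v) ++ (pedges (rcons (v :: s2) v) ++ pedges (v :: p3)).
  by rewrite Hp pedges_cat -cat_cons pedges_cat.
have Hpe' : pedges (p1 ++ v :: p3) = pedges (rcons p1 v) ++ pedges (v :: p3) by rewrite pedges_cat.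
have Hs' : (size (p1 ++ v :: p3) < n)%N.
  move: Hs; rewrite Hp !size_cat /= size_cat /=; lia.
have Ha' : all (fun e => e \in E) (pedges (p1 ++ v :: p3)).
  by move: Ha; rewrite Hpe Hpe' !all_cat => /and3P [-> _ ->].
have Hn' : p1 ++ v :: p3 != [::] by case: p1 {Hp Hpe Hpe' Hs' Ha'}.
have [q [Hq Hh Hl Hw Hsub]] := IH _ Hs' Hn' Ha'.
exists q; split => //.
- by rewrite Hh Hp; clear; case: p1.
- by rewrite Hl Hp !last_cat /= last_cat.
- apply: (le_trans Hw); rewrite /pweight Hpe Hpe' !big_cat /= lerD2l lerDr.
  rewrite big_seq; apply: sumr_ge0 => e He; apply: hw.
  by move: Ha; rewrite Hpe !all_cat => /and3P [_ /allP H _]; apply: H.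
- by move=> e /Hsub; rewrite Hpe Hpe' !mem_cat => /orP [->|->]; rewrite ?orbT.
Qed.


Lemma mem_split v s : v \in s -> exists s1 s2, s = s1 ++ v :: s2.
Proof. by case/splitPr => s1 s2; exists s1, s2. Qed.

Lemma uniq_cat_disj s t : uniq s -> uniq t -> (forall v, v \in s -> v \notin t) -> uniq (s ++ t).
Proof.
move=> Hs Ht H; rewrite cat_uniq Hs Ht andbT /=.
by apply/hasPn => v Hv; apply/negP => Hvs; move: (H v Hvs); rewrite Hv.
Qed.

Lemma size_gt2 e f y s c t : e \in cedges (y :: s ++ c :: t) -> f \in cedges (y :: s ++ c :: t) -> e != f ->
  (2 < size (y :: s ++ c :: t))%N.
Proof.
case: s => [|a s]; last by move=> _ _ _; rewrite /= size_cat /=; lia.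
case: t => [|b t]; last by [].
rewrite cedgesE /= !inE (setUC [set c] [set y]) !orbb => /eqP -> /eqP ->.
by rewrite eqxx.
Qed.

Lemma core' e f y M c N I :
  uniq (y :: M ++ c :: N) -> all (fun e => e \in E) (cedges (y :: M ++ c :: N)) ->
  e \in cedges (y :: M ++ c :: N) -> f \notin cedges (y :: M ++ c :: N) ->
  uniq (y :: rcons I c) -> all (fun e => e \in E) (pedges (y :: rcons I c)) ->
  all (fun v => v \notin y :: M ++ c :: N) I -> f = [set y; head c I] ->
  (forall S, is_path E S -> head y S = y -> last y S = c -> pweight w (y :: rcons I c) <= pweight w S) ->
  exists D, [/\ rooted_cycle E e D, f \in cedges D & cweight w D <= cweight w (y :: M ++ c :: N)].
Proof.
move=> Hu Ha He Hf Hsu Hsa HI Hfe Hopt.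
have Hce : cedges (y :: M ++ c :: N) = pedges (y :: rcons M c) ++ pedges (c :: rcons N y).
  by rewrite cedgesE rcons_cat -cat_cons pedges_cat.
have Hfseg : f \in pedges (y :: rcons I c).
  by rewrite Hfe; case: I {Hsu Hsa HI Hfe Hopt} => [|a I]; rewrite ?rcons_cons pedges_cons2 in_cons eqxx.
have Hne : e != f by apply/eqP=> Hef; move: Hf; rewrite -Hef He.
have HIc : forall v, v \in I -> v \notin y :: M ++ c :: N by apply/allP.
move: (Hu) => /= /andP [Hy1 Hu1].
have HuyI : uniq (y :: I) by move: Hsu; rewrite -rcons_cons rcons_uniq => /andP [].
have HuA : uniq (y :: rcons M c).
  have : uniq ((y :: rcons M c) ++ N) by rewrite cat_cons cat_rcons.
  by rewrite cat_uniq => /andP [].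
have HaA : all (fun e => e \in E) (pedges (y :: rcons M c)) by move: Ha; rewrite Hce all_cat => /andP [].
have HaB : all (fun e => e \in E) (pedges (c :: rcons N y)) by move: Ha; rewrite Hce all_cat => /andP [].
case: (boolP (e \in pedges (c :: rcons N y))) => HeB.
- exists (y :: I ++ c :: N).
  have HcD : cedges (y :: I ++ c :: N) = pedges (y :: rcons I c) ++ pedges (c :: rcons N y).
    by rewrite cedgesE rcons_cat -cat_cons pedges_cat.
  split.
  + apply/andP; split; last by rewrite HcD mem_cat HeB orbT.
    rewrite is_cycleE HcD all_cat Hsa HaB andbT; apply/andP; split.
      rewrite -cat_cons; apply: uniq_cat_disj => //.
        by move: Hu1; rewrite cat_uniq => /and3P [].
      move=> v; rewrite in_cons => /orP [/eqP ->|HvI].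
        by apply: contra Hy1 => H; rewrite mem_cat H orbT.
      by apply: contra (HIc v HvI) => H; rewrite in_cons mem_cat H !orbT.
    rewrite andbT; apply: (size_gt2 (e := e) (f := f)) => //; first by rewrite HcD mem_cat HeB orbT.
    by rewrite HcD mem_cat Hfseg.
  + by rewrite HcD mem_cat Hfseg.
  + rewrite /cweight HcD Hce !big_cat lerD2r; apply: Hopt => //.
      by rewrite is_pathE HuA HaA.
    by rewrite /= last_rcons.
- have HeA : e \in pedges (y :: rcons M c) by move: He; rewrite Hce mem_cat (negbTE HeB) orbF.
  exists (y :: M ++ c :: rev I).
  have Hrs : rev (y :: rcons I c) = c :: rcons (rev I) y by rewrite rev_cons rev_rcons.
  have HcD : cedges (y :: M ++ c :: rev I) = pedges (y :: rcons M c) ++ rev (pedges (y :: rcons I c)).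
    by rewrite cedgesE rcons_cat -cat_cons pedges_cat -pedges_rev Hrs.
  split.
  + apply/andP; split; last by rewrite HcD mem_cat HeA.
    rewrite is_cycleE HcD all_cat all_rev Hsa HaA andbT; apply/andP; split.
      rewrite -cat_rcons -cat_cons; apply: uniq_cat_disj => //; first by rewrite rev_uniq; case/andP: HuyI.
      move=> v Hv; rewrite mem_rev; apply/negP => HvI; have := HIc v HvI.
      rewrite !(in_cons, mem_cat); move: Hv; rewrite !(in_cons, mem_rcons).
      by case/orP=> [->|/orP [->|->]]; rewrite ?orbT.
    rewrite andbT; apply: (size_gt2 (e := e) (f := f)) => //; first by rewrite HcD mem_cat HeA.
    by rewrite HcD mem_cat mem_rev Hfseg orbT.
  + by rewrite HcD mem_cat mem_rev Hfseg orbT.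
  + rewrite /cweight HcD Hce !big_cat lerD2l.
    have -> : \sum_(e0 <- rev (pedges (y :: rcons I c))) w e0 = pweight w (y :: rcons I c).
      by apply: perm_big; rewrite perm_rev.
    have HrB : rev (c :: rcons N y) = y :: rcons (rev N) c by rewrite rev_cons rev_rcons.
    rewrite -/(pweight w (c :: rcons N y)) -(pweight_rev (c :: rcons N y)) HrB; apply: Hopt => //; last by rewrite /= last_rcons.
    rewrite -HrB is_pathE rev_uniq pedges_rev all_rev HaB andbT.
    apply/andP; split; first by rewrite HrB. rewrite -rcons_cons rcons_uniq.
    apply/andP; split; last by move: Hu1; rewrite cat_uniq => /and3P [].
    by apply: contra Hy1 => H; rewrite mem_cat H orbT.
Qed.

Lemma core C0 e f y q :
  is_cycle E C0 -> e \in cedges C0 -> f \notin cedges C0 -> y \in C0 ->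
  is_path E (y :: q) -> has (fun v => v \in C0) q -> f = [set y; head y q] ->
  (forall I c rest, q = I ++ c :: rest -> forall S, is_path E S -> head y S = y -> last y S = c ->
      pweight w (y :: rcons I c) <= pweight w S) ->
  exists D, [/\ rooted_cycle E e D, f \in cedges D & cweight w D <= cweight w C0].
Proof.
move=> Hc He Hf Hy Hp Hh Hfe Hopt.
have [I [c [rest [Hq Hcc HI]]]] := first_hit Hh.
have [X [Z HXZ]] := mem_split Hy.
subst C0.
have Hperm := rot_cedges X y Z.
have Hmem : forall v, (v \in X ++ y :: Z) = (v \in y :: Z ++ X).
  by move=> v; apply/perm_mem; rewrite -cat_cons perm_catC.
have Hyq : y \notin q by move: Hp; rewrite is_pathE => /and3P [_ /andP [] ].
have Hcy : c != y by apply: contraNneq Hyq => <-; rewrite Hq mem_cat in_cons eqxx orbT.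
have : c \in Z ++ X by move: Hcc; rewrite /= Hmem in_cons (negbTE Hcy).
case/mem_split => M [N HZX].
move: Hc; rewrite is_cycleE => /and3P [Hu _ Ha].
have [D [HD HfD HwD]] : exists D, [/\ rooted_cycle E e D, f \in cedges D & cweight w D <= cweight w (y :: M ++ c :: N)].
  apply: core'.
- have Hpu : perm_eq (X ++ y :: Z) (y :: Z ++ X) by rewrite -cat_cons perm_catC.
  by rewrite -HZX -(perm_uniq Hpu).
- by rewrite -HZX -(perm_all _ Hperm).
- by rewrite -HZX -(perm_mem Hperm).
- by rewrite -HZX -(perm_mem Hperm).
- by move: Hp; rewrite is_pathE Hq -cat_rcons -cat_cons cat_uniq => /and3P [_ /and3P [H _ _] _]; exact: H.
- by move: Hp; rewrite is_pathE Hq -cat_cons pedges_cat all_cat => /and3P [_ _ /andP [H _]]; exact: H.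
- apply/allP => v Hv; rewrite -HZX -Hmem; exact: (allP HI v Hv).
- by rewrite Hfe Hq; case: (I).
- by move=> S; apply: (Hopt I c rest Hq S).
exists D; split => //; apply: (le_trans HwD).
by rewrite /cweight -HZX (perm_big _ Hperm).
Qed.

End Helpers.

Section Main.
Variables (V : finType) (E : {set {set V}}) (R : realFieldType) (w : {set V} -> R).
Implicit Types (x y z u v a b c d : V) (p q r s t I M N X Z : seq V) (e : {set V}).

Lemma ambit_edge_v (Cs : seq (seq V)) i y z : [set y; z] \in ambit_edges Cs i ->
  (y \in ambit_verts Cs i) && (z \in ambit_verts Cs i).
Proof.
rewrite !inE => /hasP [cc Hcc Hin]; case/andP: (mem_cedges_v Hin) => Hy Hz.
by apply/andP; split; apply/hasP; exists cc.
Qed.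

Lemma in_ambit_good (Cs : seq (seq V)) i x r : x \in ambit_verts Cs i ->
  (forall p1 y z p2, x :: r = p1 ++ y :: z :: p2 -> y \in ambit_verts Cs i -> [set y; z] \in ambit_edges Cs i) ->
  in_ambit Cs i (x :: r).
Proof.
elim: r x => [|z r IH] x Hx Hg.
  by split => [v|e //]; rewrite mem_seq1 => /eqP ->.
have Hxz := Hg [::] x z r erefl Hx.
have /andP [_ Hz] := ambit_edge_v Hxz.
have [IHv IHe] : in_ambit Cs i (z :: r).
  by apply: IH => // p1 y z' p2 H Hy; apply: (Hg (x :: p1)) => //; rewrite H.
split => [v|e].
  by rewrite in_cons => /orP [/eqP ->|/IHv].
by rewrite pedges_cons2 in_cons => /orP [/eqP ->|/IHe].
Qed.

Lemma no_escape (t1 t2 : V) (Cs : seq (seq V)) i y q (t : V) :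
  greedy_seq E w [set t1; t2] Cs -> unambiguous E w -> t \in [:: t1; t2] ->
  y \in ambit_verts Cs i -> is_path E (y :: q) -> last y q = t -> q != [::] ->
  [set y; head y q] \notin ambit_edges Cs i ->
  (forall I c rest, q = I ++ c :: rest -> forall S, is_path E S -> head y S = y -> last y S = c ->
      pweight w (y :: rcons I c) <= pweight w S) -> False.
Proof.
move=> Hg [_ Hunc] Ht Hy Hp Hl Hq Hf Hopt.
move: Hy; rewrite inE => /(has_nthP [::]) [m Hm Hym].
have [Hmi Hms] : (m < i)%N /\ (m < size Cs)%N by move: Hm; rewrite size_take_min leq_min => /andP.
rewrite nth_take // in Hym.
have [Hroot Hnew Hmin] := Hg m Hms.
move: Hroot => /andP [Hcyc He].
have Ht0 : t \in nth [::] Cs m.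
  by case/andP: (mem_cedges_v He) => H1 H2; move: Ht; rewrite !inE => /orP [] /eqP ->.
have Hf0 : [set y; head y q] \notin cedges (nth [::] Cs m).
  apply: contra Hf => H; rewrite inE; apply/(has_nthP [::]); exists m => //.
  by rewrite nth_take.
have Hh : has (fun v => v \in nth [::] Cs m) q.
  apply/hasP; exists t => //; rewrite -Hl; case: (q) Hq => [//|a q'] _; by rewrite /= mem_last.
have [D [HD HfD HwD]] := core Hcyc He Hf0 Hym Hp Hh (erefl _) Hopt.
have Hnew' : has_new_edge (take m Cs) D.
  apply/hasP; exists [set y; head y q] => //.
  apply: contra Hf => /hasP [d Hd Hin]; rewrite inE; apply/hasP; exists d => //.
  by move: Hd; rewrite -(minn_idPl (ltnW Hmi)) take_min => /mem_take.
have Hle := Hmin D HD Hnew'.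
have Heq : cweight w D = cweight w (nth [::] Cs m) by apply/le_anti; rewrite Hle HwD.
move: HD => /andP [HDc _].
move: (Hunc _ _ HDc Hcyc Heq) => /setP /(_ [set y; head y q]).
by rewrite !inE HfD (negbTE Hf0).
Qed.

Lemma walk_facts p1 y I c rest S' :
  last y S' = c ->
  [/\ pedges (p1 ++ y :: I ++ c :: rest) = pedges (rcons p1 y) ++ (pedges (y :: rcons I c) ++ pedges (c :: rest)),
      pedges (p1 ++ y :: S' ++ rest) = pedges (rcons p1 y) ++ (pedges (y :: S') ++ pedges (c :: rest)),
      forall d, head d (p1 ++ y :: S' ++ rest) = head d (p1 ++ y :: I ++ c :: rest)
    & forall d, last d (p1 ++ y :: S' ++ rest) = last d (p1 ++ y :: I ++ c :: rest)].
Proof.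
move=> Hl; split.
- by rewrite pedges_cat -cat_cons pedges_cat.
- by rewrite pedges_cat -cat_cons pedges_catl Hl.
- by move=> d; case: p1.
- by move=> d; rewrite !last_cat /= !last_cat Hl.
Qed.

Lemma ppath_of u v Q (s0 t : V) : is_path E Q -> head s0 Q = s0 -> (s0 == u) || (s0 == v) ->
  last s0 Q = t -> [set u; v] \notin pedges Q -> ppath E u v Q t /\ head u Q = s0.
Proof.
case: Q => [//|q0 Q] HQ /= Hq0; subst q0 => Hs Hl Hn; split => //.
by rewrite /ppath HQ Hs -[last u (s0 :: Q)]/(last s0 Q) Hl eqxx Hn.
Qed.

End Main.

Unset Implicit Arguments. Set Strict Implicit.

Theorem lemma2 (V : finType) (E : {set {set V}}) (R : realFieldType)
    (w : {set V} -> R) (t1 t2 : V) (Cs : seq (seq V)) (i : nat) :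
  simple_graph E ->
  two_connected E ->
  (forall e, e \in E -> 0 < w e) ->
  unambiguous E w ->
  [set t1; t2] \in E ->
  greedy_seq E w [set t1; t2] Cs ->
  (i <= size Cs)%N ->
  (forall x t p, x \in ambit_verts Cs i -> t \in [:: t1; t2] ->
     shortest_path E w p x t -> in_ambit Cs i p) /\
  (forall u v a t q, [set u; v] \in ambit_edges Cs i ->
     0 < a < w [set u; v] -> t \in [:: t1; t2] ->
     shortest_ppath E w u v a q t -> in_ambit Cs i q).
Proof.
move=> _ _ Hpos Hun He Hg Hi.
have hw : forall e, e \in E -> 0 <= w e by move=> e /Hpos /ltW.
have Hseg : forall p1 y I c rest S', last y S' = c ->
   pweight w (p1 ++ y :: I ++ c :: rest) <= pweight w (p1 ++ y :: S' ++ rest) ->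
   pweight w (y :: rcons I c) <= pweight w (y :: S').
  move=> p1 y I c rest S' Hl; case: (walk_facts p1 I rest Hl) => H1 H2 _ _.
  by rewrite /pweight H1 H2 !big_cat /= lerD2l lerD2r.
split.
- move=> x t p Hx Ht [Hpft Hmin].
  move: (Hpft) => /and3P [Hp /eqP Hh /eqP Hl].
  case: p Hp Hh Hl Hpft Hmin => [//|x0 r] Hp Hh Hl Hpft Hmin; move: Hh => /= Hh; subst x0.
  apply: in_ambit_good => // p1 y z p2 Hr Hy.
  case: (boolP ([set y; z] \in ambit_edges Cs i)) => // Hbad; exfalso.
  have HPa : is_path E (p1 ++ y :: z :: p2) by rewrite -Hr.
  apply: (no_escape (q := z :: p2) Hg Hun Ht Hy) => //.
  + move: HPa; rewrite !is_pathE => /and3P [_ Hu Ha]; apply/and3P; split => //.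
      by move: Hu; rewrite cat_uniq => /and3P [_ _ ->].
    by move: Ha; rewrite pedges_cat all_cat => /andP [_ ->].
  + by move: Hl; rewrite Hr last_cat.
  + move=> I c rest Hq [//|y' S'] HS /= Hh' HSl; subst y'.
    apply: (Hseg p1 y I c rest S' HSl).
    have [H1 H2 H3 H4] := walk_facts p1 I rest HSl.
    have HWa : all (fun e => e \in E) (pedges (p1 ++ y :: S' ++ rest)).
      move: HPa HS; rewrite Hq !is_pathE H1 H2 !all_cat.
      by case/and3P => _ _ /and3P [-> _ ->] /and3P [_ _ ->].
    have HWn : p1 ++ y :: S' ++ rest != [::] by case: (p1).
    have [Q [HQ HQh HQl HQw _]] := shorten_walk hw x (ltnSn _) HWn HWa.
    rewrite -Hq -Hr; apply: le_trans (Hmin Q _) HQw.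
    by rewrite /path_from_to HQ HQh HQl H3 H4 -Hq -Hr Hl /= !eqxx.
- move=> u v a t q Huv /andP [Ha0 Ha1] Ht [Hpp Hmin].
  move: (Hpp) => /and4P [Hq Hhd /eqP Hl Hnuv].
  case: q Hq Hhd Hl Hnuv Hpp Hmin => [//|x r] Hq Hhd Hl Hnuv Hpp Hmin.
  move: Hhd => /= Hhd.
  have Hx : x \in ambit_verts Cs i.
    by move: Huv => /ambit_edge_v /andP [Hu Hv]; case/orP: Hhd => /eqP ->.
  apply: in_ambit_good => // p1 y z p2 Hr Hy.
  case: (boolP ([set y; z] \in ambit_edges Cs i)) => // Hbad; exfalso.
  have HPa : is_path E (p1 ++ y :: z :: p2) by rewrite -Hr.
  apply: (no_escape (q := z :: p2) Hg Hun Ht Hy) => //.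
  + move: HPa; rewrite !is_pathE => /and3P [_ Hu Ha]; apply/and3P; split => //.
      by move: Hu; rewrite cat_uniq => /and3P [_ _ ->].
    by move: Ha; rewrite pedges_cat all_cat => /andP [_ ->].
  + by move: Hl; rewrite Hr last_cat.
  + move=> I c rest Hq' [//|y' S'] HS /= Hh' HSl; subst y'.
    apply: (Hseg p1 y I c rest S' HSl).
    have [H1 H2 H3 H4] := walk_facts p1 I rest HSl.
    have HWa : all (fun e => e \in E) (pedges (p1 ++ y :: S' ++ rest)).
      move: HPa HS; rewrite Hq' !is_pathE H1 H2 !all_cat.
      by case/and3P => _ _ /and3P [-> _ ->] /and3P [_ _ ->].
    have HWn : p1 ++ y :: S' ++ rest != [::] by case: (p1).
    have Hcpos : forall s0, 0 < (if s0 == u then a else w [set u; v] - a).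
      by move=> s0; case: ifP => _; lra.
    have Hcle : forall s0, (if s0 == u then a else w [set u; v] - a) <= w [set u; v].
      by move=> s0; case: ifP => _; lra.
    have HWh : head x (p1 ++ y :: S' ++ rest) = x by rewrite H3 -Hq' -Hr.
    have HWl : last x (p1 ++ y :: S' ++ rest) = t by rewrite H4 -Hq' -Hr.
    rewrite -Hq' -Hr.
    move: HWa HWn HWh HWl; set W := p1 ++ y :: S' ++ rest => HWa HWn HWh HWl.
    have Hmin' := Hmin; rewrite /ppweight /= in Hmin'.
    case: (boolP ([set u; v] \in pedges W)) => HuvW.
    * have [W1 [a' [b [W2 [HW Hab Hn]]]]] := last_occ HuvW.
      have HWe : pedges W = pedges (rcons W1 a') ++ ([set a'; b] :: pedges (b :: W2))
        by rewrite HW pedges_cat pedges_cons2.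
      have Hba : all (fun e => e \in E) (pedges (b :: W2))
        by move: HWa; rewrite HWe all_cat => /andP [_ /andP [_ H]]; exact: H.
      have HbW2 : b :: W2 != [::] by [].
      have [Q [HQ HQh HQl HQw HQs]] := shorten_walk hw b (ltnSn _) HbW2 Hba.
      have Hb : (b == u) || (b == v).
        have : b \in [set u; v] by rewrite Hab set22.
        by rewrite !inE.
      have HbW : last b W2 = t by rewrite -HWl HW last_cat.
      have [HppQ HQu] := ppath_of HQ HQh Hb (etrans HQl HbW) (contra (fun H => HQs _ H) Hn).
      have := Hmin' Q HppQ; rewrite /ppweight HQu => Hm.
      have HWw : pweight w W = pweight w (rcons W1 a') + (w [set u; v] + pweight w (b :: W2)).
        by rewrite /pweight HWe big_cat big_cons Hab.
      have HA : 0 <= pweight w (rcons W1 a').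
        rewrite /pweight big_seq; apply: sumr_ge0 => e0 He0; apply: hw.
        by move: HWa; rewrite HWe all_cat => /andP [/allP H _]; apply: H.
      have := Hcpos x; have := Hcle b; move: Hm HQw HWw HA.
      set cx := (if x == u then _ else _); set cb := (if b == u then _ else _).
      set A1 := pweight w (rcons W1 a'); set A2 := pweight w (b :: W2); set AQ := pweight w Q.
      set AW := pweight w W; set AP := pweight w (x :: r); set wu := w [set u; v].
      lra.
    * have [Q [HQ HQh HQl HQw HQs]] := shorten_walk hw x (ltnSn _) HWn HWa.
      have [HppQ HQu] := ppath_of HQ (etrans HQh HWh) Hhd (etrans HQl HWl) (contra (fun H => HQs _ H) HuvW).
      have := Hmin' Q HppQ; rewrite /ppweight HQu => Hm.
      lra.
Qed.
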